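(* Let $n\ge 2$, $K_n=(V,E)$ the complete graph, and $M_1,M_2$ matchings in $K_n$. If the graph $(V, M_1\triangle M_2)$ has a single non-trivial connected component (a component with more than one node), then $\bm{c}=\chi(M_1)-\chi(M_2)$ is a circuit of the Matching polytope $P_{\mathrm{match}}(n)=\operatorname{conv}\{\chi(M): M\text{ a matching in }K_n\}$, with circuits taken with respect to the linear description $$\bm{x}(E[S])\le (|S|-1)/2 \ \text{for all } S\subseteq V,\ |S| \text{ odd},\ |S|\ge 3;\quad \bm{x}(\delta(v))\le 1\ \text{for all } v\in V;\quad \bm{x}\ge \bm{0}.$$
   Context: $\chi(M)\in\{0,1\}^E$ is the characteristic vector of $M$; $\triangle$ is symmetric difference; $E[S]$ is the set of edges with both endpoints in $S$, $\delta(v)$ the set of edges incident to $v$, $\bm{x}(F)=\sum_{e\in F}x_e$. Circuits: for a polytope $P=\{\bm{x}: B\bm{x}\le \bm{d}\}$ given by a fixed linear system, a nonzero vector $\bm{g}$ is a circuit of $P$ if $\operatorname{supp}(B\bm{g})$ is inclusion-minimal among the sets $\operatorname{supp}(B\bm{y})$ with $\bm{y}\neq\bm{0}$. *)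

(* Defs.v *)
From HB Require Import structures.
From mathcomp Require Import all_boot all_order all_algebra.
From mathcomp Require Import reals.
Set Implicit Arguments. Unset Strict Implicit. Unset Printing Implicit Defensive.
Import Order.TTheory GRing.Theory Num.Theory.
Local Open Scope ring_scope.

Definition edge (n : nat) := {e : {set 'I_n} | #|e| == 2%N}.

Definition is_matching n (M : {set edge n}) : Prop :=
  forall e f : edge n, e \in M -> f \in M -> e != f -> [disjoint val e & val f].

Definition chi (R : realType) n (M : {set edge n}) : edge n -> R :=
  fun e => (e \in M)%:R.

Definition symdiff n (A B : {set edge n}) : {set edge n} := (A :\: B) :|: (B :\: A).

Definition adjD n (D : {set edge n}) : rel 'I_n :=
  fun u v => [exists e in D, (u \in val e) && (v \in val e) && (u != v)].

Definition compD n (D : {set edge n}) (x : 'I_n) : {set 'I_n} :=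
  [set y | connect (adjD D) x y].

Definition nontrivial_components n (D : {set edge n}) : {set {set 'I_n}} :=
  [set compD D x | x in [pred x | 1 < #|compD D x|]%N].

(* Row index of the linear system B x <= d:
   inl (inl S) : the odd-set constraint x(E[S]) <= (|S|-1)/2,
   inl (inr v) : the degree constraint x(delta(v)) <= 1,
   inr e       : the nonnegativity constraint -x_e <= 0. *)
Definition row n := (({set 'I_n} + 'I_n) + edge n)%type.

Definition valid_row n (r : row n) : bool :=
  match r with
  | inl (inl A) => odd #|A| && (3 <= #|A|)%N
  | _ => true
  end.

Definition Bx (R : realType) n (x : edge n -> R) (r : row n) : R :=
  match r with
  | inl (inl A) => \sum_(e : edge n | val e \subset A) x e
  | inl (inr v) => \sum_(e : edge n | v \in val e) x e
  | inr e => - x e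
  end.

Definition suppB (R : realType) n (x : edge n -> R) : {set row n} :=
  [set r | valid_row r & Bx x r != 0].

Definition nonzero_vec (R : realType) n (x : edge n -> R) : Prop :=
  exists e, x e != 0.

Definition is_circuit (R : realType) n (g : edge n -> R) : Prop :=
  nonzero_vec g /\
  forall y : edge n -> R, nonzero_vec y ->
    suppB y \subset suppB g -> suppB y = suppB g.

(* Main.v *)
Require Import Defs.
From HB Require Import structures.
From mathcomp Require Import all_boot all_order all_algebra.
From mathcomp Require Import reals.
Import Order.TTheory GRing.Theory Num.Theory.
Local Open Scope ring_scope.

Theorem corollary1 (R : realType) (n : nat) (hn : (2 <= n)%N)
    (M1 M2 : {set edge n}) :
  is_matching M1 -> is_matching M2 ->
  #|nontrivial_components (symdiff M1 M2)| = 1%N ->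
  is_circuit (fun e => chi R M1 e - chi R M2 e).
Proof.
move=> hM1 hM2 hNC.
have inD : forall e, (e \in symdiff M1 M2) = ((e \in M1) != (e \in M2)).
  by move=> e; rewrite /symdiff !inE; case: (e \in M1); case: (e \in M2).
have gE : forall e, chi R M1 e - chi R M2 e = (e \in M1)%:R - (e \in M2)%:R by [].
have g0 : forall e, e \notin symdiff M1 M2 -> chi R M1 e - chi R M2 e = 0.
  move=> e; rewrite inD gE.
  by case: (e \in M1); case: (e \in M2); rewrite /= ?subrr.
have gg1 : forall e, e \in symdiff M1 M2 ->
    (chi R M1 e - chi R M2 e) * (chi R M1 e - chi R M2 e) = 1.
  move=> e; rewrite inD gE.
  by case: (e \in M1); case: (e \in M2); rewrite /= ?subr0 ?sub0r ?mulr1 ?mulrNN ?mulr1.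
have same : forall M : {set edge n}, is_matching M -> forall a b v, a \in M -> b \in M ->
   v \in val a -> v \in val b -> a = b.
  move=> M hM a b v aM bM va vb; apply/eqP; apply/negPn/negP => ab.
  by move: (disjointFr (hM a b aM bM ab) va); rewrite vb.
have adj : forall e f v, e \in symdiff M1 M2 -> f \in symdiff M1 M2 -> e != f ->
  v \in val e -> v \in val f ->
  (chi R M1 e - chi R M2 e) + (chi R M1 f - chi R M2 f) = 0 /\
  (forall e', e' \in symdiff M1 M2 -> v \in val e' -> (e' == e) || (e' == f)).
  move=> e f v eD fD ef ve vf.
  have nM1 : ~~ ((e \in M1) && (f \in M1)).
    apply/negP => /andP[a b]; move/eqP: ef; apply; exact: same hM1 _ _ v a b ve vf.
  have nM2 : ~~ ((e \in M2) && (f \in M2)).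
    apply/negP => /andP[a b]; move/eqP: ef; apply; exact: same hM2 _ _ v a b ve vf.
  split.
    move: eD fD nM1 nM2; rewrite !inD !gE.
    by case: (e \in M1); case: (e \in M2); case: (f \in M1); case: (f \in M2);
      rewrite /= ?subr0 ?sub0r ?subrr ?addrN ?addNr.
  move=> e' e'D ve'.
  move: e'D; rewrite inD.
  case e'1: (e' \in M1); case e'2: (e' \in M2) => //= _.
  - case e1: (e \in M1). by rewrite (same _ hM1 e' e v e'1 e1 ve' ve) eqxx.
    have f1 : f \in M1.
      by move: eD fD nM1 nM2; rewrite !inD e1; case: (f \in M1); case: (e \in M2); case: (f\in M2).
    by rewrite (same _ hM1 e' f v e'1 f1 ve' vf) eqxx orbT.
  - case e2: (e \in M2). by rewrite (same _ hM2 e' e v e'2 e2 ve' ve) eqxx.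
    have f2 : f \in M2.
      by move: eD fD nM1 nM2; rewrite !inD e2; case: (f \in M1); case: (e \in M1); case: (f\in M2).
    by rewrite (same _ hM2 e' f v e'2 f2 ve' vf) eqxx orbT.
have degsum : forall (x : edge n -> R) e f v, (forall e', e' \notin symdiff M1 M2 -> x e' = 0) ->
   e \in symdiff M1 M2 -> f \in symdiff M1 M2 -> e != f -> v \in val e -> v \in val f ->
   Bx x (inl (inr v)) = x e + x f.
  move=> x e f v x0 eD fD ef ve vf.
  have [_ only] := adj e f v eD fD ef ve vf.
  rewrite /= (bigD1 e) //= (bigD1 f) /=; last by rewrite vf eq_sym ef.
  rewrite big1 ?addr0 // => e' /andP[/andP[ve' ne'e] ne'f].
  apply: x0; apply/negP => e'D; by move: (only e' e'D ve'); rewrite (negPf ne'e) (negPf ne'f).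
have ends : forall e : edge n, forall u, u \in val e -> exists w, w \in val e /\ u != w.
  move=> e u ue; have /cards2P [a [b [ab Eab]]] := valP e.
  move: ue; rewrite Eab !inE => /orP[] /eqP ->.
  - by exists b; rewrite !inE eqxx orbT.
  - by exists a; split; [rewrite !inE eqxx | rewrite eq_sym].
have /cards1P [C hC] : #|nontrivial_components (symdiff M1 M2)| == 1%N by rewrite hNC.
have compC : forall e u, e \in symdiff M1 M2 -> u \in val e -> compD (symdiff M1 M2) u = C.
  move=> e u eD ue; have [w [we uw]] := ends e u ue.
  have : compD (symdiff M1 M2) u \in nontrivial_components (symdiff M1 M2).
    apply/imsetP; exists u => //; rewrite inE; apply/card_gt1P; exists u, w.
    split; rewrite ?inE ?connect0 //.
    apply: connect1; apply/existsP; exists e; by rewrite eD ue we uw.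
  by rewrite hC inE => /eqP.
split.
  case: (pickP (mem (symdiff M1 M2))) => [e eD | noD].
    exists e; apply/negP => /eqP g0e; have := gg1 e eD; rewrite g0e mulr0 => /eqP.
    by rewrite eq_sym oner_eq0.
  have : C \in nontrivial_components (symdiff M1 M2) by rewrite hC set11.
  case/imsetP => x; rewrite inE => /card_gt1P [a [b [ain bin ab]]] _.
  have cx : forall z, z \in compD (symdiff M1 M2) x -> z = x.
    move=> z; rewrite inE => /connectP [[|c p] /=]; first by move=> _ ->.
    case/andP => /existsP [e /andP [eD _]]; by move: (noD e); rewrite /= eD.
  by move: ab; rewrite (cx a ain) (cx b bin) eqxx.
move=> y [e0 ye0] sub.
have insupp : forall r, valid_row r -> Bx (fun e => chi R M1 e - chi R M2 e) r = 0 -> Bx y r = 0.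
  move=> r vr Bg; have [//|Byr] := eqVneq (Bx y r) 0.
  have : r \in suppB y by rewrite inE vr Byr.
  by move/(subsetP sub); rewrite inE vr Bg eqxx.
have y0 : forall e, e \notin symdiff M1 M2 -> y e = 0.
  move=> e eD; have := insupp (inr e) isT; rewrite /= g0 // oppr0 => /(_ erefl) /eqP.
  by rewrite oppr_eq0 => /eqP.
have hconst : forall e f v, e \in symdiff M1 M2 -> f \in symdiff M1 M2 ->
    v \in val e -> v \in val f ->
    y e * (chi R M1 e - chi R M2 e) = y f * (chi R M1 f - chi R M2 f).
  move=> e f v eD fD ve vf; have [/eqP -> // | ef] := boolP (e == f).
  have [gs _] := adj e f v eD fD ef ve vf.
  have := insupp (inl (inr v)) isT.
  rewrite (degsum _ e f v g0 eD fD ef ve vf) gs => /(_ erefl).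
  rewrite (degsum _ e f v y0 eD fD ef ve vf).
  move/eqP: gs; rewrite addr_eq0 => /eqP ->; move/eqP; rewrite addr_eq0 => /eqP ->.
  by rewrite mulrNN.
have hall : forall e f, e \in symdiff M1 M2 -> f \in symdiff M1 M2 ->
    y e * (chi R M1 e - chi R M2 e) = y f * (chi R M1 f - chi R M2 f).
  move=> e f eD fD.
  have [u [ue _]] : exists u, u \in val e /\ True.
    have /cards2P [a [b [_ Eab]]] := valP e; exists a; by rewrite Eab !inE eqxx.
  have [w [wf _]] : exists w, w \in val f /\ True.
    have /cards2P [a [b [_ Eab]]] := valP f; exists a; by rewrite Eab !inE eqxx.
  have cuw : connect (adjD (symdiff M1 M2)) u w.
    have : w \in compD (symdiff M1 M2) w by rewrite inE connect0.
    by rewrite (compC f w fD wf) -(compC e u eD ue) inE.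
  have prop : forall p a, path (adjD (symdiff M1 M2)) a p ->
     (forall e', e' \in symdiff M1 M2 -> a \in val e' ->
        y e' * (chi R M1 e' - chi R M2 e') = y e * (chi R M1 e - chi R M2 e)) ->
     (forall e', e' \in symdiff M1 M2 -> last a p \in val e' ->
        y e' * (chi R M1 e' - chi R M2 e') = y e * (chi R M1 e - chi R M2 e)).
    elim=> [|b p IH] a //= /andP[ab pth] Pa; apply: IH pth _.
    move: ab => /existsP [d /andP [dD /andP [/andP [ad bd] _]]].
    move=> e' e'D be'; rewrite (hconst e' d b e'D dD be' bd); exact: Pa.
  case/connectP: cuw => p pth wE.
  symmetry; apply: (prop p u pth) => //; last by rewrite -wE.
  move=> e' e'D ue'; exact: hconst e' e u e'D eD ue' ue.
have e0D : e0 \in symdiff M1 M2 by have [//|nd] := boolP (e0 \in symdiff M1 M2); move: ye0; rewrite y0 // eqxx.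
set t := y e0 * (chi R M1 e0 - chi R M2 e0).
have yt : forall e, y e = t * (chi R M1 e - chi R M2 e).
  move=> e; have [eD | nD] := boolP (e \in symdiff M1 M2).
    by rewrite /t (hall e0 e e0D eD) -mulrA gg1 ?mulr1.
  by rewrite y0 // g0 // mulr0.
have tn0 : t != 0.
  rewrite /t mulf_neq0 //; apply/negP => /eqP g0e; have := gg1 e0 e0D.
  by rewrite g0e mulr0 => /eqP; rewrite eq_sym oner_eq0.
have Bxt : forall r, Bx y r = t * Bx (fun e => chi R M1 e - chi R M2 e) r.
  case=> [[A|v]|e] /=.
  - by rewrite mulr_sumr; apply: eq_bigr => e _; exact: yt.
  - by rewrite mulr_sumr; apply: eq_bigr => e _; exact: yt.
  - by rewrite yt mulrN.
apply/setP => r; rewrite /suppB !inE Bxt mulf_eq0 negb_or tn0.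
by rewrite andTb.
Qed.
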